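(* Let $\tau:\mathbb{F}_p((t))^d\to\mathbb{F}_p((t))^d$, $(f_1,\dots,f_d)\mapsto(tf_1,\dots,tf_d)$, and let $\phi:\mathbb{F}_p((t))\to\mathrm{Aut}(\mathbb{F}_p((t))^d)$ be a continuous homomorphism satisfying $\phi(tf)=\tau\circ\phi(f)\circ\tau^{-1}$ for all $f$. Suppose that for every $f\in\mathbb{F}_p((t))$ the block matrix of $\phi(f)$ is lower triangular, i.e. $\phi(f)_{i,j}=0$ whenever $j>i$. Let $\mathcal{A}$ be the subalgebra of $\mathrm{End}(\mathbb{F}_p((t))^d)$ generated by $\{\phi(t^r)-\mathrm{Id}: r\in\mathbb{Z}\}$ and $\mathcal{A}^d=\{a_1\cdots a_d : a_1,\dots,a_d\in\mathcal{A}\}$. Then $B_{i,i}=0$ for every $B\in\mathcal{A}^d$ and every $i\in\mathbb{Z}$.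
   Context: $\mathrm{Aut}(\mathbb{F}_p((t))^d)$ has the Braconnier topology (basis of identity neighbourhoods $\{\alpha:\alpha(x)-x\in U,\ \alpha^{-1}(x)-x\in U\ \forall x\in K\}$, $K$ compact, $U$ an identity neighbourhood). $\mathrm{End}(\mathbb{F}_p((t))^d)$ is the ring of continuous additive endomorphisms. For $n\in\mathbb{Z}$ let $\mathbb{V}_n=\{(a_1t^n,\dots,a_dt^n):a_r\in\mathbb{F}_p\}\cong\mathbb{F}_p^d$, $\pi_n$ the projection onto $\mathbb{V}_n$ taking $t^n$-coefficients, and for $A\in\mathrm{End}$, $A_{i,j}=\pi_i\circ A|_{\mathbb{V}_j}$ as a $d\times d$ matrix over $\mathbb{F}_p$. *)

(* Defs.v *)
From HB Require Import structures.
From mathcomp Require Import all_boot all_order all_algebra zify.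
Set Implicit Arguments. Unset Strict Implicit. Unset Printing Implicit Defensive.
Import Order.TTheory GRing.Theory Num.Theory.
Local Open Scope ring_scope.

(* F_p((t)) = laurent 'F_p and F_p((t))^d = laurent 'rV['F_p]_d
   (the coefficient of t^n of (f_1,..,f_d) is the row vector of the t^n
   coefficients of the f_r). *)
Definition lbd (M : zmodType) (x : int -> M) :=
  exists N : int, forall n : int, n < N -> x n = 0.

Definition laurent (M : zmodType) := {x : int -> M | lbd x}.

Definition coef (M : zmodType) (x : laurent M) : int -> M := proj1_sig x.

Lemma lbd_add (M : zmodType) (x y : int -> M) :
  lbd x -> lbd y -> lbd (fun n => x n + y n).
Proof.
move=> [N hN] [K hK]; exists (Order.min N K) => n.
by rewrite lt_min => /andP[h1 h2]; rewrite hN // hK // addr0.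
Qed.

Lemma lbd_opp (M : zmodType) (x : int -> M) : lbd x -> lbd (fun n => - x n).
Proof. by move=> [N hN]; exists N => n hn; rewrite hN // oppr0. Qed.

Lemma lbd_zero (M : zmodType) : lbd (fun _ : int => (0 : M)).
Proof. by exists 0. Qed.

Lemma lbd_shift (M : zmodType) (x : int -> M) : lbd x -> lbd (fun n => x (n - 1)).
Proof. by move=> [N hN]; exists (N + 1) => n hn; apply: hN; lia. Qed.

Lemma lbd_unshift (M : zmodType) (x : int -> M) : lbd x -> lbd (fun n => x (n + 1)).
Proof. by move=> [N hN]; exists (N - 1) => n hn; apply: hN; lia. Qed.

Lemma lbd_mono (M : zmodType) (r : int) (v : M) :
  lbd (fun n => if n == r then v else 0).
Proof. by exists r => n hn; rewrite lt_eqF. Qed.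

Lemma lbd_scale (R : pzRingType) (M : lmodType R) (c : R) (x : int -> M) :
  lbd x -> lbd (fun n => c *: x n).
Proof. by move=> [N hN]; exists N => n hn; rewrite hN // scaler0. Qed.

Definition ladd (M : zmodType) (x y : laurent M) : laurent M :=
  exist _ _ (lbd_add (proj2_sig x) (proj2_sig y)).
Definition lopp (M : zmodType) (x : laurent M) : laurent M :=
  exist _ _ (lbd_opp (proj2_sig x)).
Definition lsub (M : zmodType) (x y : laurent M) : laurent M := ladd x (lopp y).
Definition lzero (M : zmodType) : laurent M := exist _ _ (@lbd_zero M).
Definition lscale (R : pzRingType) (M : lmodType R) (c : R) (x : laurent M)
  : laurent M := exist _ _ (lbd_scale c (proj2_sig x)).

Arguments lzero {M}.

Definition tmul (M : zmodType) (x : laurent M) : laurent M :=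
  exist _ _ (lbd_shift (proj2_sig x)).
Definition tinv (M : zmodType) (x : laurent M) : laurent M :=
  exist _ _ (lbd_unshift (proj2_sig x)).

Arguments tmul {M} x.
Arguments tinv {M} x.

Definition mono (M : zmodType) (r : int) (v : M) : laurent M :=
  exist _ _ (lbd_mono r v).

Definition tpow (p : nat) (r : int) : laurent 'F_p := mono r 1.

Definition ball (M : zmodType) (N : int) (x : laurent M) :=
  forall n : int, n < N -> coef x n = 0.

Definition is_open (M : zmodType) (O : laurent M -> Prop) :=
  forall x, O x -> exists N, forall y, ball N (lsub y x) -> O y.

Definition is_compact (M : zmodType) (K : laurent M -> Prop) :=
  forall (I : Type) (O : I -> laurent M -> Prop),
    (forall i, is_open (O i)) -> (forall x, K x -> exists i, O i x) ->
    exists s : seq I, forall x, K x -> exists2 i, List.In i s & O i x.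

Definition nbhd0 (M : zmodType) (U : laurent M -> Prop) :=
  exists O, is_open O /\ O lzero /\ (forall x, O x -> U x).

Definition cont (M : zmodType) (h : laurent M -> laurent M) :=
  forall x N, exists K, forall y, ball K (lsub y x) -> ball N (lsub (h y) (h x)).

(* continuity of the inverse of a bijection h *)
Definition cont_inv (M : zmodType) (h : laurent M -> laurent M) :=
  forall x N, exists K, forall y, ball K (lsub (h y) (h x)) -> ball N (lsub y x).

Definition additive_map (M : zmodType) (h : laurent M -> laurent M) :=
  forall x y, h (ladd x y) = ladd (h x) (h y).

Definition is_aut (M : zmodType) (h : laurent M -> laurent M) :=
  [/\ additive_map h, bijective h, cont h & cont_inv h].

(* Braconnier topology: gamma lies in the basic neighbourhood alpha * W(K,U) of
   alpha, where W(K,U) = {b : b x - x \in U, b^-1 x - x \in U, forall x \in K}.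
   alpha^-1 gamma x - x \in U  is written  forall z, alpha z = gamma x -> z - x \in U;
   (alpha^-1 gamma)^-1 x - x = gamma^-1 alpha x - x similarly. *)
Definition brac_near (M : zmodType) (alpha gamma : laurent M -> laurent M)
  (K U : laurent M -> Prop) :=
  (forall x z, K x -> alpha z = gamma x -> U (lsub z x)) /\
  (forall x y, K x -> gamma y = alpha x -> U (lsub y x)).

Definition brac_continuous (p d : nat)
  (phi : laurent 'F_p -> laurent 'rV['F_p]_d -> laurent 'rV['F_p]_d) :=
  forall f (K U : laurent 'rV['F_p]_d -> Prop),
    is_compact K -> nbhd0 U ->
    exists N : int, forall g, ball N (lsub g f) -> brac_near (phi f) (phi g) K U.

(* A_{i,j} = pi_i o A |_{V_j} as a d x d matrix over F_p (column s = image of the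
   s-th standard basis vector of V_j) *)
Definition blk (p d : nat) (A : laurent 'rV['F_p]_d -> laurent 'rV['F_p]_d)
  (i j : int) : 'M['F_p]_d :=
  \matrix_(r < d, s < d) (coef (A (mono j (delta_mx 0 s))) i) 0 r.

Inductive in_alg (p d : nat)
  (gens : (laurent 'rV['F_p]_d -> laurent 'rV['F_p]_d) -> Prop) :
  (laurent 'rV['F_p]_d -> laurent 'rV['F_p]_d) -> Prop :=
| alg_gen a : gens a -> in_alg gens a
| alg_zero : in_alg gens (fun _ => lzero)
| alg_add a b : in_alg gens a -> in_alg gens b -> in_alg gens (fun x => ladd (a x) (b x))
| alg_scale (c : 'F_p) a : in_alg gens a -> in_alg gens (fun x => lscale c (a x))
| alg_comp a b : in_alg gens a -> in_alg gens b -> in_alg gens (a \o b).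

Definition prod_maps (T : Type) (s : seq (T -> T)) : T -> T :=
  foldr (fun a acc => a \o acc) id s.

(* Main.v *)
Require Import Defs.
From mathcomp Require Import all_boot all_order all_algebra.
From Stdlib Require Import Lia.
From mathcomp Require zify.
From Stdlib Require Import Classical FunctionalExtensionality ProofIrrelevance.

Module Helpers.
Set Implicit Arguments. Unset Strict Implicit. Unset Printing Implicit Defensive.
Import Order.TTheory GRing.Theory Num.Theory.
Local Open Scope ring_scope.

Inductive malg (F : fieldType) (n : nat) (S : 'M[F]_n -> Prop) : 'M[F]_n -> Prop :=
| mg_gen A : S A -> malg S A
| mg_zero : malg S 0
| mg_add A B : malg S A -> malg S B -> malg S (A + B)
| mg_scale c A : malg S A -> malg S (c *: A)
| mg_mul A B : malg S A -> malg S B -> malg S (A *m B).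

Lemma malg_inv (F : fieldType) n (S : 'M[F]_n -> Prop) (Z : 'M[F]_n) :
  (forall N, S N -> (Z *m N <= Z)%MS) -> forall A, malg S A -> (Z *m A <= Z)%MS.
Proof.
move=> hS A; elim=> {A} [A /hS //| |A B _ hA _ hB|c A _ hA|A B _ hA _ hB].
- by rewrite mulmx0 sub0mx.
- by rewrite mulmxDr addmx_sub.
- by rewrite -scalemxAr scalemx_sub.
- by rewrite mulmxA (submx_trans (submxMr _ hA)).
Qed.

Lemma malg_rel (F : fieldType) n (S : 'M[F]_n -> Prop) k (Y : 'M[F]_(k, n)) (Z : 'M[F]_n) :
  (forall N, S N -> (Z *m N <= Z)%MS) ->
  (forall N, S N -> (Y *m N <= Z)%MS) -> forall A, malg S A -> (Y *m A <= Z)%MS.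
Proof.
move=> hZ hS A; elim=> {A} [A /hS //| |A B _ hA _ hB|c A _ hA|A B hmA hA hmB hB].
- by rewrite mulmx0 sub0mx.
- by rewrite mulmxDr addmx_sub.
- by rewrite -scalemxAr scalemx_sub.
- by rewrite mulmxA (submx_trans (submxMr _ hA)) // (malg_inv hZ).
Qed.

Lemma null_rel (F : fieldType) m (S : 'M[F]_m.+1 -> Prop)
 (comm : forall A B, S A -> S B -> A *m B = B *m A)
 (nil : forall A, S A -> exists k, A ^+ k = 0)
 (Z : 'M[F]_m.+1) (hZ : forall N, S N -> (Z *m N <= Z)%MS) :
 forall (W : 'M[F]_m.+1), (forall N, S N -> (W *m N <= W)%MS) -> ~~ (W <= Z)%MS ->
 exists v : 'rV[F]_m.+1, [/\ (v <= W)%MS, ~~ (v <= Z)%MS & forall N, S N -> (v *m N <= Z)%MS].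
Proof.
move=> W; move: {2}(\rank W) (leqnn (\rank W)) => r.
elim: r W => [|r IH] W hr hW hWZ.
  move: hr; rewrite leqn0 mxrank_eq0 => /eqP W0.
  by move: hWZ; rewrite W0 sub0mx.
case: (classic (exists N, S N /\ ~~ (W *m N <= Z)%MS)) => [[N [SN hN]] | hall].
  pose W' := (W :&: kermx (N *m cokermx Z))%MS.
  have memW' : forall k (X : 'M_(k, m.+1)), (X <= W')%MS = (X <= W)%MS && (X *m N <= Z)%MS.
    by move=> k X; rewrite sub_capmx sub_kermx mulmxA -submxE.
  have W'W : (W' <= W)%MS := capmxSl _ _.
  have W'N : (W' *m N <= Z)%MS by have := submx_refl W'; rewrite memW' => /andP[].
  have rk : (\rank W' <= r)%N.
    have : (\rank W' < \rank W)%N.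
      by apply: rank_ltmx; rewrite ltmxE W'W /= memW' negb_and hN orbT.
    move=> h; lia.
  have inv' : forall M, S M -> (W' *m M <= W')%MS.
    move=> M SM; rewrite memW' (submx_trans (submxMr M W'W) (hW M SM)) /=.
    rewrite -mulmxA (comm _ _ SM SN) mulmxA.
    exact: submx_trans (submxMr M W'N) (hZ M SM).
  have nZ : ~~ (W' <= Z)%MS.
    have [k hk] := nil N SN.
    have [j [hj1 hj2]] : exists j, ~~ (W *m N ^+ j <= Z)%MS /\ (W *m N ^+ j.+1 <= Z)%MS.
      have P0 : ~~ (W *m N ^+ 0 <= Z)%MS by rewrite expr0 mulmx1.
      have Pk : (W *m N ^+ k <= Z)%MS by rewrite hk mulmx0 sub0mx.
      elim: k {hk} Pk => [|k IHk] Pk; first by rewrite Pk in P0.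
      case: (boolP (W *m N ^+ k <= Z)%MS) => hk'; first exact: IHk.
      by exists k.
    have XW : forall j, (W *m N ^+ j <= W)%MS.
      elim=> [|i IHi]; first by rewrite expr0 mulmx1.
      rewrite exprSr -mulmxE mulmxA.
      exact: submx_trans (submxMr N IHi) (hW N SN).
    have XW' : (W *m N ^+ j <= W')%MS.
      by rewrite memW' XW /= -mulmxA mulmxE -exprSr.
    apply/negP => h; have := submx_trans XW' h; by rewrite (negbTE hj1).
  have [v [v1 v2 v3]] := IH W' rk inv' nZ.
  by exists v; split => //; exact: submx_trans v1 W'W.
have hall' : forall N, S N -> (W *m N <= Z)%MS.
  move=> N SN; apply/negPn/negP => h; apply: hall; by exists N.
move/row_subPn: hWZ => [i hi].
exists (row i W); split => //; first exact: row_sub.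
move=> N SN; rewrite -row_mul; exact: submx_trans (row_sub _ _) (hall' N SN).
Qed.

Lemma mx_chain (F : fieldType) m (S : 'M[F]_m.+1 -> Prop)
 (comm : forall A B, S A -> S B -> A *m B = B *m A)
 (nil : forall A, S A -> exists k, A ^+ k = 0) :
 forall k, exists Z : 'M[F]_m.+1,
  [/\ forall N, S N -> (Z *m N <= Z)%MS, (minn k m.+1 <= \rank Z)%N &
      forall X : 'M_m.+1, (X <= Z)%MS -> forall s, size s = k ->
        (forall A, List.In A s -> malg S A) -> X *m foldr mulmx 1%:M s = 0].
Proof.
elim=> [|k [Z [hZ hr hk]]].
  exists 0; split.
  - by move=> N _; rewrite mul0mx sub0mx.
  - by rewrite min0n.
  - by move=> X; rewrite submx0 => /eqP -> s _ _; rewrite mul0mx.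
case: (boolP (row_full Z)) => full.
  exists Z; split => //.
  - by move: full; rewrite /row_full => /eqP ->; exact: geq_minr.
  - move=> X XZ [|A s] //= [hs] hA.
    rewrite mulmxA; apply: hk => //; last by move=> B hB; apply: hA; right.
    apply: submx_trans (submxMr A XZ) _; apply: malg_inv hZ _ _; apply: hA; by left.
have hW : ~~ (1%:M <= Z)%MS by rewrite sub1mx.
have [v [_ v2 v3]] := null_rel comm nil hZ (fun N _ => submx1 _) hW.
have sZv : forall A, malg S A -> ((Z + v)%MS *m A <= Z)%MS.
  move=> A hA; rewrite addsmxMr addsmx_sub; apply/andP; split.
    exact: malg_inv hZ _ hA.
  exact: malg_rel hZ v3 _ hA.
exists (Z + v)%MS; split.
- move=> N SN; apply: submx_trans (sZv N (mg_gen SN)) (addsmxSl _ _).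
- have h1 : (\rank Z < \rank (Z + v)%MS)%N.
    apply: rank_ltmx; rewrite ltmxE addsmxSl /=; apply/negP => h.
    by have := submx_trans (addsmxSr Z v) h; rewrite (negbTE v2).
  have h2 : (\rank Z < m.+1)%N.
    by rewrite ltn_neqAle rank_leq_col andbT; exact: full.
  have h3 := rank_leq_col (Z + v)%MS.
  lia.
- move=> X XZ [|A s] //= [hs] hA.
  rewrite mulmxA; apply: hk => //; last by move=> B hB; apply: hA; right.
  apply: submx_trans (submxMr A XZ) _; apply: sZv; apply: hA; by left.
Qed.

Lemma mx_main (F : fieldType) m (S : 'M[F]_m.+1 -> Prop)
 (comm : forall A B, S A -> S B -> A *m B = B *m A)
 (nil : forall A, S A -> exists k, A ^+ k = 0) s :
 size s = m.+1 -> (forall A, List.In A s -> malg S A) -> foldr mulmx 1%:M s = 0.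
Proof.
move=> hs hA; have [Z [_ hr hk]] := mx_chain comm nil m.+1.
have full : (1%:M <= Z)%MS.
  by rewrite sub1mx /row_full eqn_leq rank_leq_col /=; rewrite minnn in hr.
by have := hk 1%:M full s hs hA; rewrite mul1mx.
Qed.

Lemma lext (M : zmodType) (x y : laurent M) : (forall n, coef x n = coef y n) -> x = y.
Proof.
case: x y => [x hx] [y hy] /= h.
have e : x = y := functional_extensionality _ _ h.
subst; f_equal; apply proof_irrelevance.
Qed.

Lemma addlin (p n : nat) (V : lmodType 'F_p) (g : 'rV['F_p]_n -> V) :
  (forall u v, g (u + v) = g u + g v) ->
  forall u, g u = \sum_(t < n) u 0 t *: g (delta_mx 0 t).
Proof.
move=> hg.
have g0 : g 0 = 0.
  have := hg 0 0; rewrite addr0 => h; apply: (addrI (g 0)); by rewrite -h addr0.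
have gn : forall u k, g (u *+ k) = g u *+ k.
  by move=> u; elim=> [|k IH]; rewrite ?mulr0n ?g0 // !mulrS hg IH.
have gs : forall c u, g (c *: u) = c *: g u.
  by move=> c u; rewrite -[c]natr_Zp !scaler_nat gn.
move=> u; rewrite {1}(row_sum_delta u) (big_morph g hg g0).
by apply: eq_bigr => t _; rewrite gs.
Qed.

Definition tri (p d : nat) (A : laurent 'rV['F_p]_d -> laurent 'rV['F_p]_d) :=
  forall j x, ball j x -> ball j (A x).

Lemma additive_zero (M : zmodType) (A : laurent M -> laurent M) :
  additive_map A -> A lzero = lzero.
Proof.
move=> hA.
have e : ladd lzero lzero = @lzero M by apply: lext => n /=; rewrite addr0.
have := hA lzero lzero; rewrite e => h; apply: lext => n /=.
have h' := f_equal (fun z => coef z n) h; simpl in h'.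
apply: (addrI (coef (A lzero) n)); by rewrite addr0 -h'.
Qed.

Lemma mono_add (M : zmodType) j (u v : M) : mono j (u + v) = ladd (mono j u) (mono j v).
Proof. by apply: lext => n /=; case: (n == j); rewrite ?addr0. Qed.

Lemma lin_mono (p d : nat) (A : laurent 'rV['F_p]_d -> laurent 'rV['F_p]_d) :
  additive_map A -> forall j n u,
  coef (A (mono j u)) n = \sum_(t < d) u 0 t *: coef (A (mono j (delta_mx 0 t))) n.
Proof.
move=> hA j n; apply: (addlin (g := fun u => coef (A (mono j u)) n)) => u v /=.
by rewrite mono_add hA.
Qed.

Lemma lbd_trunc (M : zmodType) (x : laurent M) (K : int) :
  lbd (fun l => if l < K then coef x l else 0).
Proof. case: x => f [N hN] /=; exists N => l hl; by rewrite hN ?if_same. Qed.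

Lemma tri_of (p d : nat) (A : laurent 'rV['F_p]_d -> laurent 'rV['F_p]_d) :
  additive_map A -> cont A ->
  (forall (n j : int) s, n < j -> coef (A (mono j (delta_mx 0 s))) n = 0) -> tri A.
Proof.
move=> hA hcont h.
have hb : forall (n j : int) u, n < j -> coef (A (mono j u)) n = 0.
  move=> n j u hn; rewrite lin_mono //; apply: big1 => t _; by rewrite h // scaler0.
have hc : forall m : nat, forall j x, ball j x ->
    (forall l, j + m%:Z <= l -> coef x l = 0) -> ball j (A x).
  elim=> [|m IH] j x hx hs.
    have -> : x = lzero.
      apply: lext => l /=; case: (ltP l j) => hl; first exact: hx.
      by apply: hs; rewrite addr0.
    by rewrite additive_zero.
  pose x'' := lsub x (mono j (coef x j)).
  have ex : x = ladd (mono j (coef x j)) x''.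
    by apply: lext => l /=; rewrite addrC subrK.
  have b'' : ball (j + 1) x''.
    move=> l hl /=; case: (eqVneq l j) => [->|ne]; first by rewrite ?eqxx subrr.
    rewrite ?(negbTE ne) ?oppr0 ?subr0 ?addr0; apply: hx; move/eqP: ne => ne; lia.
  have s'' : forall l, (j + 1) + m%:Z <= l -> coef x'' l = 0.
    move=> l hl /=; have ne : l != j by apply/eqP => e; lia.
    rewrite ?(negbTE ne) ?oppr0 ?subr0 ?addr0; apply: hs; lia.
  have hb'' := IH (j + 1) x'' b'' s''.
  move=> n hn; rewrite ex hA.
  change (coef (A (mono j (coef x j))) n + coef (A x'') n = 0).
  rewrite (hb n j) ?hb'' ?add0r //; lia.
move=> j x hx n hn.
have [K hK] := hcont x (n + 1).
pose y : laurent 'rV['F_p]_d := exist _ _ (lbd_trunc x K).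
have hy : ball K (lsub y x) by move=> l hl /=; rewrite hl subrr.
have := hK y hy n; move=> /(_ ltac:(lia)).
change (coef (A y) n - coef (A x) n = 0 -> coef (A x) n = 0).
have y0 : coef (A y) n = 0.
  apply: (hc (absz (K - j)) j y) => //.
    by move=> l hl /=; case: ifP => // _; exact: hx.
  move=> l hl /=; rewrite ifF //; apply/negbTE; rewrite -leNgt; lia.
by rewrite y0 add0r => /eqP; rewrite oppr_eq0 => /eqP.
Qed.

Lemma mono_ball (M : zmodType) (i : int) (u : M) : ball i (mono i u).
Proof. by move=> l hl /=; rewrite lt_eqF. Qed.

Lemma blk_comp (p d : nat) (A B : laurent 'rV['F_p]_d -> laurent 'rV['F_p]_d) i :
  additive_map A -> tri A -> tri B -> blk (A \o B) i i = blk A i i *m blk B i i.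
Proof.
move=> hA tA tB; apply/matrixP => r s; rewrite !mxE.
set w := B (mono i (delta_mx 0 s)).
have hw : ball i w by apply: tB; apply: mono_ball.
pose u := coef w i.
pose w'' := lsub w (mono i u).
have ew : w = ladd (mono i u) w'' by apply: lext => l /=; rewrite addrC subrK.
have b'' : ball (i + 1) w''.
  move=> l hl /=; case: (eqVneq l i) => [->|ne]; first by rewrite ?eqxx subrr.
  rewrite ?(negbTE ne) ?oppr0 ?subr0 ?addr0; apply: hw; move/eqP: ne => ne; lia.
change (coef (A w) i 0 r = \sum_j blk A i i r j * blk B i i j s).
rewrite ew hA.
change ((coef (A (mono i u)) i + coef (A w'') i) 0 r =
  \sum_j blk A i i r j * blk B i i j s).
rewrite (tA _ _ b'' i) ?addr0; last lia.
rewrite lin_mono // summxE; apply: eq_bigr => t _.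
rewrite !mxE mulrC; reflexivity.
Qed.

Lemma blk_id (p d : nat) i : blk (fun x : laurent 'rV['F_p]_d => x) i i = 1%:M.
Proof. by apply/matrixP => r s; rewrite !mxE /= eqxx mxE eqxx /= eq_sym. Qed.

Fixpoint lnat (M : zmodType) (f : laurent M) (k : nat) : laurent M :=
  if k is k'.+1 then ladd f (lnat f k') else lzero.

Lemma in_map_P (T U : Type) (f : T -> U) (Q : U -> Prop) (s : seq T) :
  (forall a, List.In a s -> Q (f a)) -> forall b, List.In b (map f s) -> Q b.
Proof.
elim: s => [|a s IH] h b //= [<-|hb]; first by apply: h; left.
by apply: IH hb => c hc; apply: h; right.
Qed.

Lemma alg_props (p d : nat)
  (phi : laurent 'F_p -> laurent 'rV['F_p]_d -> laurent 'rV['F_p]_d)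
  (hA : forall f, additive_map (phi f)) (hT : forall f, tri (phi f)) (i : int)
  (a : laurent 'rV['F_p]_d -> laurent 'rV['F_p]_d) :
  Defs.in_alg (fun b => exists r : int, b = (fun x => lsub (phi (tpow p r) x) x)) a ->
  [/\ additive_map a, tri a &
     malg (fun M => exists r : int, M = blk (phi (tpow p r)) i i - 1%:M) (blk a i i)].
Proof.
elim=> {a} [a [r ->]| |a b _ [aA aT aM] _ [bA bT bM]|c a _ [aA aT aM]|a b _ [aA aT aM] _ [bA bT bM]].
- split.
  + by move=> x y; rewrite hA; apply: lext => n /=; rewrite opprD addrACA.
  + move=> j x hx n hn.
    change (coef (phi (tpow p r) x) n - coef x n = 0).
    by rewrite (hT _ _ _ hx n hn) hx // subr0.
  + apply: mg_gen; exists r; apply/matrixP => r' s; rewrite !mxE /= eqxx !mxE eqxx /=.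
    by rewrite eq_sym.
- split.
  + by move=> x y; apply: lext => n /=; rewrite addr0.
  + by move=> j x _ n _.
  + have -> : blk (fun _ : laurent 'rV['F_p]_d => lzero) i i = 0.
      by apply/matrixP => r s; rewrite !mxE.
    exact: mg_zero.
- split.
  + by move=> x y; rewrite aA bA; apply: lext => n /=; rewrite addrACA.
  + move=> j x hx n hn.
    change (coef (a x) n + coef (b x) n = 0).
    by rewrite (aT _ _ hx n hn) (bT _ _ hx n hn) addr0.
  + have -> : blk (fun x => ladd (a x) (b x)) i i = blk a i i + blk b i i.
      by apply/matrixP => r s; rewrite !mxE.
    exact: mg_add.
- split.
  + by move=> x y; rewrite aA; apply: lext => n /=; rewrite scalerDr.
  + move=> j x hx n hn.
    change (c *: coef (a x) n = 0).
    by rewrite (aT _ _ hx n hn) scaler0.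
  + have -> : blk (fun x => lscale c (a x)) i i = c *: blk a i i.
      by apply/matrixP => r s; rewrite !mxE.
    exact: mg_scale.
- split.
  + by move=> x y /=; rewrite bA aA.
  + by move=> j x hx; apply: aT; apply: bT.
  + rewrite blk_comp //; exact: mg_mul.
Qed.

Lemma prod_props (p d : nat) (i : int)
  (s : seq (laurent 'rV['F_p]_d -> laurent 'rV['F_p]_d)) :
  (forall a, List.In a s -> additive_map a /\ tri a) ->
  tri (prod_maps s) /\
  blk (prod_maps s) i i = foldr mulmx 1%:M (map (fun a => blk a i i) s).
Proof.
elim: s => [|a s IH] h /=.
  by split; [move=> j x | exact: blk_id].
have [aA aT] := h a (or_introl erefl).
have [sT sB] := IH (fun b hb => h b (or_intror hb)).
split; first by move=> j x hx; apply: aT; apply: sT.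
by rewrite blk_comp // sB.
Qed.

Lemma main_aux (p d : nat) (hp : prime p)
  (phi : laurent 'F_p -> laurent 'rV['F_p]_d -> laurent 'rV['F_p]_d)
  (phi_aut : forall f, is_aut (phi f))
  (phi_hom : forall f g, phi (ladd f g) = phi f \o phi g)
  (phi_tri : forall f (i j : int), i < j -> blk (phi f) i j = 0) :
  forall s : seq (laurent 'rV['F_p]_d -> laurent 'rV['F_p]_d),
    size s = d ->
    (forall a, List.In a s ->
       Defs.in_alg (fun b => exists r : int, b = (fun x => lsub (phi (tpow p r) x) x)) a) ->
    forall i : int, blk (prod_maps s) i i = 0.
Proof.
move=> s hs hin i.
have phiA : forall f, additive_map (phi f) by move=> f; case: (phi_aut f).
have phiT : forall f, tri (phi f).
  move=> f; case: (phi_aut f) => hA _ hc _; apply: tri_of hA hc _ => n j s' hn.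
  apply/rowP => r; have := congr1 (fun M : 'M['F_p]_d => M r s') (phi_tri f n j hn).
  by rewrite !mxE.
destruct d as [|m].
  by apply/matrixP => -[].
pose S := fun M => exists r : int, M = blk (phi (tpow p r)) i i - 1%:M.
have hprops := fun a (ha : List.In a s) => alg_props phiA phiT i (hin a ha).
have [_ ->] := prod_props i (fun a ha => let: And3 x y _ := hprops a ha in conj x y).
have phi0 : phi lzero = id.
  apply: functional_extensionality => x.
  have e : ladd lzero lzero = @lzero 'F_p by apply: lext => n /=; rewrite addr0.
  have := phi_hom lzero lzero; rewrite e => h.
  case: (phi_aut lzero) => _ hbij _ _.
  apply: (bij_inj hbij).
  move: (congr1 (fun g => g x) h) => /= hx; by rewrite -hx.
have Dmul : forall f g, blk (phi f) i i *m blk (phi g) i i = blk (phi (ladd f g)) i i.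
  by move=> f g; rewrite phi_hom blk_comp.
apply: (mx_main (S := S)).
- move=> A B [r ->] [r' ->].
  have hc : blk (phi (tpow p r)) i i *m blk (phi (tpow p r')) i i =
            blk (phi (tpow p r')) i i *m blk (phi (tpow p r)) i i.
    rewrite !Dmul; congr (blk (phi _) i i); apply: lext => n /=; by rewrite addrC.
  rewrite !mulmxBl !mulmxBr !mulmx1 !mul1mx hc.
  set X := _ *m _.
  rewrite !opprB !addrA addrAC; symmetry; rewrite addrAC (addrAC X); reflexivity.
- move=> A [r ->]; exists p.
  set f := tpow p r; set D := blk (phi f) i i.
  have hk : forall k, blk (phi (lnat f k)) i i = D ^+ k.
    elim=> [|k IH] /=; first by rewrite phi0; exact: blk_id.
    by rewrite -Dmul IH exprS mulmxE.
  have lp : lnat f p = lzero.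
    apply: lext => n.
    have h : forall k, coef (lnat f k) n = coef f n *+ k.
      elim=> [|k IH]; first by [].
      change (coef f n + coef (lnat f k) n = coef f n *+ k.+1); by rewrite IH mulrS.
    rewrite h; change (coef f n *+ p = 0); by rewrite -mulr_natr pchar_Fp_0 // mulr0.
  have Dp : D ^+ p = 1 by rewrite -hk lp phi0; exact: blk_id.
  have chM : p \in [pchar 'M['F_p]_m.+1].
    apply/andP; split => //; apply/eqP/matrixP => a b; rewrite mulmxnE !mxE.
    by rewrite -mulr_natr pchar_Fp_0 // mulr0.
  have := pFrobenius_autB_comm chM (commr1 D).
  by rewrite !pFrobenius_autE Dp expr1n subrr.
- by rewrite size_map.
- apply: in_map_P => a ha; by case: (hprops a ha).
Qed.

End Helpers.

Unset Implicit Arguments. Set Strict Implicit.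
Import Defs.
Local Open Scope ring_scope.

Theorem mainTheorem15 (p d : nat) (hp : prime p)
  (phi : laurent 'F_p -> laurent 'rV['F_p]_d -> laurent 'rV['F_p]_d)
  (phi_aut : forall f, is_aut (phi f))
  (phi_hom : forall f g, phi (ladd f g) = phi f \o phi g)
  (phi_cont : brac_continuous phi)
  (phi_conj : forall f, phi (tmul f) = tmul \o phi f \o tinv)
  (phi_tri : forall f (i j : int), i < j -> blk (phi f) i j = 0) :
  forall s : seq (laurent 'rV['F_p]_d -> laurent 'rV['F_p]_d),
    size s = d ->
    (forall a, List.In a s ->
       in_alg (fun b => exists r : int, b = (fun x => lsub (phi (tpow p r) x) x)) a) ->
    forall i : int, blk (prod_maps s) i i = 0.

Proof.
exact: (@Helpers.main_aux p d hp phi phi_aut phi_hom phi_tri).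
Qed.
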